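(* Let $n\ge1$. For every $f\in A_{\vec 0}(\mathbb{D}^n)$, every $\epsilon>0$ and every $\theta\in[0,2\pi)$, no non-zero positive measure in $A_{\vec 0}(\mathbb{D}^n)^\perp$ has support contained in $f^{-1}(H^\theta_\epsilon)=\{z\in\mathbb{T}^n: f(z)\in H^\theta_\epsilon\}$.
   Context: $A(\mathbb{D}^n)$ is the polydisc algebra (continuous on $\overline{\mathbb{D}}^n$, holomorphic on $\mathbb{D}^n$), regarded as a subspace of $C(\mathbb{T}^n)$; $A_{\vec 0}(\mathbb{D}^n)=\{z_1\cdots z_n g: g\in A(\mathbb{D}^n)\}$; $A_{\vec 0}(\mathbb{D}^n)^\perp$ is the set of complex Borel measures of bounded variation on $\mathbb{T}^n$ annihilating every function in $A_{\vec 0}(\mathbb{D}^n)$. $H^\theta_\epsilon=\{e^{i\theta}w: w\in\mathbb{C},\ \operatorname{Re}(w)\ge\epsilon\}$. *)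

(* Defs.v *)
From HB Require Import structures.
From mathcomp Require Import all_boot all_order all_algebra.
From mathcomp Require Import all_classical all_reals all_analysis.
From mathcomp Require Import complex.
Import Order.TTheory GRing.Theory Num.Theory.
Import numFieldNormedType.Exports numFieldTopology.Exports.

Set Implicit Arguments.
Unset Strict Implicit.
Unset Printing Implicit Defensive.

Local Open Scope classical_set_scope.
Local Open Scope ring_scope.

Definition CC (R : rcfType) : numClosedFieldType := R[i].

Section Polydisc.
Variables (R : realType) (n : nat).

(* C^n is 'rV[CC R]_n (coordinates z 0 j, j : 'I_n), with the product topology. *)
Definition Cn := 'rV[CC R]_n.

Definition open_polydisc : set Cn := [set z | forall j : 'I_n, `|z ord0 j| < 1].
Definition closed_polydisc : set Cn := [set z | forall j : 'I_n, `|z ord0 j| <= 1].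
Definition torus : set Cn := [set z | forall j : 'I_n, `|z ord0 j| = 1].

Definition upd (z : Cn) (j : 'I_n) (w : CC R) : Cn :=
  \row_(k < n) (if k == j then w else z ord0 k).

(* holomorphic on the open polydisc: (continuous and) complex differentiable
   in each variable separately (Rudin, Function theory in polydiscs; by
   Hartogs/Osgood this is the usual notion). *)
Definition holomorphic_on_polydisc (f : Cn -> CC R) : Prop :=
  forall z, open_polydisc z -> forall j : 'I_n,
    derivable (fun w : CC R => f (upd z j w)) (z ord0 j) 1.

Definition in_polydisc_algebra (f : Cn -> CC R) : Prop :=
  {within closed_polydisc, continuous f} /\ holomorphic_on_polydisc f.

Definition in_A0 (f : Cn -> CC R) : Prop :=
  exists g : Cn -> CC R, in_polydisc_algebra g /\
    forall z, closed_polydisc z -> f z = (\prod_(j < n) z ord0 j) * g z.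

Definition BorelCn := g_sigma_algebraType (@open Cn).

Definition msupport (mu : {measure set BorelCn -> \bar R}) : set Cn :=
  [set z | forall U : set Cn, open U -> U z -> (0 < mu U)%E].

Definition annihilates_A0 (mu : {measure set BorelCn -> \bar R}) : Prop :=
  forall g : Cn -> CC R, in_A0 g ->
    (\int[mu]_(x in (torus : set BorelCn)) (complex.Re (g x))%:E = 0)%E /\
    (\int[mu]_(x in (torus : set BorelCn)) (complex.Im (g x))%:E = 0)%E.

End Polydisc.

Definition Hhalf (R : realType) (theta eps : R) : set (CC R) :=
  [set u | exists w : CC R, eps <= complex.Re w /\
                             u = ((cos theta +i* sin theta)%C : CC R) * w].

(* Main.v *)
Set Warnings "-all".
Require Import Defs.
From HB Require Import structures.
From mathcomp Require Import all_boot all_order all_algebra.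
From mathcomp Require Import all_classical all_reals all_analysis.
From mathcomp Require Import complex.
Import Order.TTheory GRing.Theory Num.Theory.
Import numFieldNormedType.Exports numFieldTopology.Exports.
Local Open Scope classical_set_scope.
Local Open Scope ring_scope.
Set Implicit Arguments.
Unset Strict Implicit.
From mathcomp Require Import ring lra.
Lemma capprox (R : realType) (x : CC R) (r : R) : 0 < r ->
  exists a b : rat, `|x - ((ratr a +i* ratr b)%C : CC R)| < (r%:C)%C.
Proof.
move=> r0.
have [a] := @rat_in_itvoo R (complex.Re x - r/2) (complex.Re x + r/2) ltac:(lra).
have [b] := @rat_in_itvoo R (complex.Im x - r/2) (complex.Im x + r/2) ltac:(lra).
rewrite !in_itv /= => /andP[b1 b2] /andP[a1 a2].
exists a, b.
move: x a1 a2 b1 b2 => [u v] /= a1 a2 b1 b2.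
have -> : ((u +i* v)%C : CC R) - ((ratr a +i* ratr b)%C : CC R) = ((u - ratr a) +i* (v - ratr b))%C by [].
rewrite normc_def /= ltcR.
rewrite -(@ger0_norm _ r) ?(ltW r0) // -sqrtr_sqr ltr_sqrt; last by rewrite exprn_gt0.
nra.
Qed.
Lemma t (R : realType) (n : nat) (U : set (Cn R n)) x : open U -> U x ->
  exists2 e : CC R, 0 < e & forall z : Cn R n, (forall j, `|x ord0 j - z ord0 j| < e) -> U z.
Proof.
move=> oU Ux.
have : nbhs x U by apply: open_nbhs_nbhs.
move=> /nbhs_ballP[e e0 sU]; exists e => // z hz; apply: sU.
split => // i j; rewrite (ord1 i) -ball_normE /ball_ /=. exact: hz.
Qed.

Definition qc (R : realType) (p : rat * rat) : CC R := ((ratr p.1 +i* ratr p.2)%C : CC R).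

Definition Bq (R : realType) (n : nat) (q : {ffun 'I_n -> rat * rat}) (r : rat) : set (Cn R n) :=
  [set z | forall j, `|z ord0 j - qc R (q j)| < ((ratr r : R)%:C)%C].


Lemma approx (R : realType) (n : nat) (U : set (Cn R n)) x : open U -> U x ->
  exists q r, Bq q r x /\ Bq q r `<=` U.
Proof.
move=> oU Ux; have [e e0 hU] := t oU Ux.
move: e0; rewrite ltcE /= => /andP[/eqP eI e0].
have [r] := @rat_in_itvoo R 0 (complex.Re e / 2) ltac:(lra).
rewrite in_itv /= => /andP[r0 r1].
have : forall j : 'I_n, exists p : rat * rat, `|x ord0 j - qc R p| < ((ratr r : R)%:C)%C.
  move=> j; have [a [b h]] := capprox (x ord0 j) r0; by exists (a, b).
move=> /choice[g hg]; exists [ffun j => g j], r; split.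
  by move=> j /=; rewrite ffunE.
move=> z hz; apply: hU => j.
have h1 := hg j; have h2 := hz j; rewrite /= ffunE in h2.
apply: (le_lt_trans (ler_distD (qc R (g j)) _ _)).
rewrite (distrC (qc R (g j))).
apply: (lt_le_trans (ltrD h1 h2)).
move: e eI e0 r1 => [e1 e2] /= -> e0 r1.
rewrite lecE /=; apply/andP; split; first by rewrite addr0.
lra.
Qed.
Lemma scaleA0 (R : realType) (n : nat) (k : CC R) (f : Cn R n -> CC R) :
  in_A0 f -> in_A0 (fun z => k * f z).
Proof.
move=> [g [[cg hg] eq]].
exists (fun z => k * g z); split; last by move=> z hz; rewrite eq // mulrCA.
split.
  move=> x.
  have -> : from_subspace (@closed_polydisc R n) (fun z => k * g z) = ( *%R k) \o from_subspace (@closed_polydisc R n) g by [].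
  apply: continuous_comp; first exact: cg.
  exact: mulrl_continuous.
move=> z hz j.
have H := @derivableZ _ _ _ _ k _ _ (hg z hz j).
exact H.
Qed.

Import HBNNSimple.
Lemma int_lb d (T : measurableType d) (R : realType) (mu : {measure set T -> \bar R})
  (D M : set T) (g : T -> R) : measurable M -> mu M = 0%E ->
  (forall x, ~ M x -> D x /\ 1 <= g x) ->
  (mu (~` M) <= \int[mu]_(x in D) (g x)%:E)%E.
Proof.
move=> mM M0 H.
have hneg : forall x, ~ M x -> (((fun x0 : T => (g x0)%:E) \_ D)^\- x = 0)%E.
  move=> x /H [Dx gx]; rewrite funenegE patchE (mem_set Dx) /=.
  by apply/max_idPr; rewrite lee_fin oppr_le0 (le_trans _ gx).
have hpos : forall x, ~ M x -> (1 <= ((fun x0 : T => (g x0)%:E) \_ D)^\+ x)%E.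
  move=> x /H [Dx gx]; rewrite funeposE patchE (mem_set Dx) /=.
  by rewrite le_max lee_fin gx.
rewrite /integral /=.
match goal with |- context [GRing.add _ (oppe ?X)] => set B := X end.
have -> : B = 0%E.
  apply/eqP; rewrite eq_le; apply/andP; split.
    apply: ge_ereal_sup => _ [h hh <-].
    rewrite sintegralE fsbig1 // => r _.
    have [->|r0] := eqVneq r 0; first by rewrite mul0e.
    have mh : measurable (h @^-1` [set r]) by apply: measurable_funPTI.
    suff -> : mu (HBNNSimple.NonNegSimpleFun.sort h @^-1` [set r]) = 0%E by rewrite mule0.
    apply/eqP; rewrite eq_le measure_ge0 andbT -M0; apply: (le_measure mu); rewrite ?inE //.
    move=> x /= hx; apply: contrapT => nMx.
    have := hh x; rewrite hneg // hx lee_fin => r_le0.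
    have : 0 <= r by rewrite -hx fun_ge0.
    by move=> r_ge0; move/eqP: r0; apply; apply/eqP; rewrite eq_le r_le0 r_ge0.
  apply: ereal_sup_ubound; exists nnsfun0; last exact: sintegral0.
  by move=> x /=; rewrite funenegE le_max lexx orbT.
rewrite sube0.
apply: le_trans (ereal_sup_ubound _); last first.
  exists (indic_nnsfun R (measurableC mM)); last exact: sintegral_indic.
  move=> x /=; rewrite measurable_realfun.mindicE; case: (boolP (x \in ~` M)) => xM /=.
    by apply: hpos; move: xM; rewrite inE.
  by rewrite funeposE le_max lexx orbT.
by [].
Qed.

Lemma goodF (R : realType) (theta eps : R) (w : CC R) : 0 < eps -> eps <= complex.Re w ->
  1 <= complex.Re (((cos theta -i* sin theta)%C * (eps^-1)%:C%C) * (((cos theta +i* sin theta)%C : CC R) * w)).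
Proof.
move=> e0; case: w => a b /= ha.
have h := cos2Dsin2 theta.
have hi : eps * eps^-1 = 1 by rewrite mulfV // gt_eqF.
have hi0 : 0 < eps^-1 by rewrite invr_gt0.
set c := cos theta in h *; set s := sin theta in h *; set t := eps^-1 in hi hi0 *.
rewrite !(mulr0, mul0r, subr0, addr0, add0r, mulNr, mulrN, opprK).
have -> : c * t * (c * a - s * b) + s * t * (c * b + s * a) = t * a * (c ^+ 2 + s ^+ 2) by ring.
rewrite h mulr1; nra.
Qed.

Theorem mainTheorem6 (R : realType) (n : nat) (hn : (1 <= n)%N)
  (f : Cn R n -> CC R) (eps theta : R) :
  in_A0 f -> 0 < eps -> 0 <= theta < 2 * pi ->
  ~ exists mu : {measure set BorelCn R n -> \bar R},
      (mu setT < +oo)%E /\ mu setT <> 0%E /\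
      mu (~` @torus R n) = 0%E /\
      annihilates_A0 mu /\
      msupport mu `<=` [set z | @torus R n z /\ Hhalf theta eps (f z)].
Proof.
move=> hf e0 _ [mu [fin [nz [ctor [ann sup]]]]].
pose k : CC R := ((cos theta -i* sin theta)%C * (eps^-1)%:C%C).
have [hRe _] := ann _ (scaleA0 k hf).
have good : forall z, msupport mu z -> @torus R n z /\ 1 <= complex.Re (k * f z).
  move=> z /sup [tz [w [hw ->]]]; split => //; exact: goodF.
pose I := ({ffun 'I_n -> rat * rat} * rat)%type.
pose P (i : I) := [set U : set (Cn R n) | open U /\ mu U = 0%E /\ Bq i.1 i.2 `<=` U].
pose C (j : nat) : set (Cn R n) := if @unpickle I j is Some i then xget set0 (P i) else set0.
have mopen : forall U : set (Cn R n), open U -> measurable (U : set (BorelCn R n)).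
  by move=> U oU; apply: sub_sigma_algebra.
have C1 : forall j, open (C j) /\ mu (C j) = 0%E.
  move=> j; rewrite /C; case: (unpickle j) => [i|]; last by split; [exact: open0|exact: measure0].
  have [[U PU]|nP] := pselect (exists U, P i U).
    by have [? [? _]] := xgetPex set0 (ex_intro _ U PU).
  rewrite xgetPN; first by split; [exact: open0|exact: measure0].
  by move=> U PU; apply: nP; exists U.
have C2 : ~` msupport mu `<=` \bigcup_j C j.
  move=> x hx.
  have [U [oU [Ux mU0]]] : exists U, open U /\ U x /\ mu U = 0%E.
    apply: contrapT => hN; apply: hx => U oU Ux; rewrite lt0e measure_ge0 andbT.
    by apply/negP => /eqP h; apply: hN; exists U.
  have [q [r [Bx BU]]] := approx oU Ux.
  exists (pickle ((q, r) : I)) => //; rewrite /C pickleK.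
  have [_ [_ BC]] := xgetPex set0 (ex_intro (P (q, r)) U (conj oU (conj mU0 BU))).
  exact: BC.
pose M := \bigcup_j C j.
have mM : measurable (M : set (BorelCn R n)).
  by apply: bigcupT_measurable => j; apply: mopen; exact: (C1 j).1.
have M0 : mu M = 0%E.
  apply/eqP; rewrite eq_le measure_ge0 andbT.
  rewrite -(eseries0 (f := fun j => mu (C j)) (N := 0%N) (P := xpredT)); last by move=> j _ _; exact: (C1 j).2.
  apply: measure_sigma_subadditive => //.
  by move=> j; apply: mopen; exact: (C1 j).1.
pose G := ~` M.
have mG : measurable (G : set (BorelCn R n)) by apply: measurableC.
have GS : G `<=` msupport mu.
  by move=> x Gx; apply: contrapT => hx; apply: Gx; exact: C2.
have muG : mu G = mu setT.
  by rewrite -(setUv M) setUC measureU0.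
have := @int_lb _ _ _ mu (@torus R n) M (fun x => complex.Re (k * f x)) mM M0.
move=> /(_ _) H.
have : (mu (~` M) <= 0)%E.
  rewrite -hRe; apply: H => x nMx.
  by apply: good; apply: GS.
rewrite -/G muG => hle.
apply: nz; apply/eqP; rewrite eq_le hle measure_ge0 //.
Qed.
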